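(* Under the same setting over $\mathbb{F}_2$ (leader set $\mathcal L$ with $|\mathcal L|=\mathrm{rank}_2(\mathbb{D}_{\mathcal L})=\mathrm{rank}_2(\mathbb{D})$, $\mathcal A\subseteq[{\mathsf K}]\setminus\mathcal L$ with $|\mathcal A|=t+1$, $\mathcal B=\mathcal L\cup\mathcal A$), for every choice of the subfiles $F_{i,\mathcal W}$, $$\bigoplus_{\mathcal V\in\mathscr V_{\mathcal B}}W_{\mathcal B\setminus\mathcal V}=0,\qquad\text{and consequently}\qquad W_{\mathcal A}=\bigoplus_{\mathcal V\in\mathscr V_{\mathcal B},\ \mathcal V\neq\mathcal L}W_{\mathcal B\setminus\mathcal V},$$ where every message on the right-hand side satisfies $(\mathcal B\setminus\mathcal V)\cap\mathcal L\neq\emptyset$.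
   Context: $\mathbb{D}\in\mathbb{F}_2^{{\mathsf K}\times{\mathsf N}}$ has rows $\mathbf y_k=(y_{k,1},\ldots,y_{k,{\mathsf N}})$; $\mathbb{D}_{\mathcal S}$ is the submatrix of rows indexed by $\mathcal S$; $t\in\{0,\ldots,{\mathsf K}-1\}$. Subfiles $F_{i,\mathcal W}$ ($i\in[{\mathsf N}]$, $\mathcal W\subseteq[{\mathsf K}]$, $|\mathcal W|=t$) are vectors over $\mathbb{F}_2$ of a common length. Blocks $B_{k,\mathcal W}=\sum_{n}y_{k,n}F_{n,\mathcal W}$. For $|\mathcal S|=t+1$, $W_{\mathcal S}=\bigoplus_{k\in\mathcal S}B_{k,\mathcal S\setminus\{k\}}$. $\mathscr V_{\mathcal B}$ is the family of subsets $\mathcal V\subseteq\mathcal B$ with $|\mathcal V|=|\mathcal L|$ and $\mathrm{rank}_2(\mathbb{D}_{\mathcal V})=|\mathcal L|$ (so $\mathcal L\in\mathscr V_{\mathcal B}$ and $W_{\mathcal B\setminus\mathcal L}=W_{\mathcal A}$). *)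

(* Defs.v *)
From HB Require Import structures.
From mathcomp Require Import all_boot all_order all_algebra.
Set Implicit Arguments. Unset Strict Implicit. Unset Printing Implicit Defensive.
Import GRing.Theory.
Local Open Scope ring_scope.

Definition subrows (K N : nat) (D : 'M['F_2]_(K, N)) (S : {set 'I_K}) :
  'M['F_2]_(#|S|, N) :=
  rowsub (fun i : 'I_#|S| => enum_val i) D.

Definition block (K N len : nat) (D : 'M['F_2]_(K, N))
  (F : 'I_N -> {set 'I_K} -> 'rV['F_2]_len) (k : 'I_K) (W : {set 'I_K}) :
  'rV['F_2]_len :=
  \sum_(n < N) D k n *: F n W.

Definition msg (K N len : nat) (D : 'M['F_2]_(K, N))
  (F : 'I_N -> {set 'I_K} -> 'rV['F_2]_len) (S : {set 'I_K}) :
  'rV['F_2]_len :=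
  \sum_(k in S) block D F k (S :\ k).

Definition inVB (K N : nat) (D : 'M['F_2]_(K, N)) (L B V : {set 'I_K}) : bool :=
  [&& V \subset B, #|V| == #|L| & \rank (subrows D V) == #|L|].

(* Main.v *)
Require Import Defs.
From HB Require Import structures.
From mathcomp Require Import all_boot all_order all_algebra.
From Stdlib Require Import Classical.
Import GRing.Theory.
Local Open Scope ring_scope.

Lemma f2 (x : 'F_2) : x = 0 \/ x = 1.
Proof. case: x => [[|[|m]]] //= H. left; exact/val_inj. right; exact/val_inj. Qed.

Lemma f2d (x : 'F_2) : x + x = 0.
Proof. case: (f2 x) => ->; rewrite ?addr0 //; exact/val_inj. Qed.

Lemma f2nz (x : 'F_2) : x != 0 -> x = 1.
Proof. by case: (f2 x) => ->; rewrite ?eqxx. Qed.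

Section Lin.
Variables (K N : nat) (D : 'M['F_2]_(K, N)).

Definition fr (S : {set 'I_K}) := \rank (subrows D S) == #|S|.

Definition dep (S : {set 'I_K}) (c : 'I_K -> 'F_2) :=
  (forall k, k \notin S -> c k = 0) /\ \sum_k c k *: row k D = 0.

Lemma L_free S c : fr S -> dep S c -> forall k, c k = 0.
Proof.
move=> hfr [cS csum].
have rf : row_free (subrows D S) by [].
pose v := \row_(i < #|S|) c (enum_val i).
have hv : v *m subrows D S = 0.
  rewrite mulmx_sum_row.
  under eq_bigr => i _ do rewrite /subrows row_rowsub mxE.
  rewrite -(big_enum_val (fun k => c k *: row k D)) /= -[RHS]csum big_mkcond /=.
  apply: eq_bigr => k _; case: ifP => // /negbT /cS ->; by rewrite scale0r.
have v0 : v = 0 by apply: (row_free_inj rf); rewrite hv mul0mx.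
move=> k; case: (boolP (k \in S)) => [kS|/cS //].
have [i ->] : exists i : 'I_#|S|, k = enum_val i.
  by exists (enum_rank_in kS k); rewrite enum_rankK_in.
by move/rowP: v0 => /(_ i); rewrite !mxE.
Qed.

Arguments L_free {S c}.

Lemma L_dep S : ~~ fr S -> exists c, dep S c /\ exists k, c k != 0.
Proof.
move=> nfr; apply: NNPP => hn; move/negP: nfr; apply.
apply: inj_row_free => v hv.
pose c k := \sum_(i < #|S| | enum_val i == k) v 0 i.
have cev j : c (enum_val j) = v 0 j.
  rewrite /c (eq_bigl (fun i => i == j)) ?big_pred1_eq // => i.
  by apply/eqP/eqP => [/enum_val_inj|->].
have hd : dep S c.
  split.
    move=> k kS; rewrite /c big_pred0 // => i.
    apply/negbTE; apply: contraNneq kS => <-; exact: enum_valP.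
  rewrite -[RHS]hv mulmx_sum_row.
  rewrite (partition_big (fun i : 'I_#|S| => enum_val i) xpredT) //=.
  apply: eq_bigr => k _; rewrite /c scaler_suml; apply: eq_bigr => i /eqP <-.
  by rewrite /subrows row_rowsub.
apply/rowP => j; rewrite !mxE -cev.
case: (boolP (c (enum_val j) == 0)) => [/eqP //|nz].
by exfalso; apply: hn; exists c; split => //; exists (enum_val j).
Qed.

Arguments L_dep {S}.

Lemma key r (U : {set 'I_K}) : (\rank D <= r)%N -> #|U| = r.+1 ->
  \sum_(k | (k \in U) && fr (U :\ k)) row k D = 0.
Proof.
move=> hr hU.
case: (boolP [exists k, (k \in U) && fr (U :\ k)]) => [/existsP[k0 /andP[k0U fr0]]|/existsPn H]; last first.
  by rewrite big_pred0 // => k; apply/negbTE/H.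
have nfrU : ~~ fr U.
  rewrite /fr; apply/negP => /eqP h.
  have : (\rank (subrows D U) <= r)%N.
    apply: leq_trans hr; rewrite /subrows rowsubE; exact: mxrankM_maxr.
  by rewrite h hU ltnn.
have [c [[cS csum] [j cj]]] := L_dep nfrU.
have H1 k : k \in U -> fr (U :\ k) -> c k != 0.
  move=> kU frk; apply/negP=> /eqP ck0.
  have cz : forall i, c i = 0.
    apply: (L_free frk); split => // i; rewrite in_setD1 negb_and negbK.
    by case/orP => [/eqP->//|/cS //].
  by move: cj; rewrite cz eqxx.
have H2 k : k \in U -> c k != 0 -> fr (U :\ k).
  move=> kU ck; apply/negPn/negP => nfr.
  have [d [[dS dsum] [j' dj]]] := L_dep nfr.
  have ck0 : c k0 = 1 by apply: f2nz; apply: H1.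
  case: (f2 (d k0)) => dk0.
    have dz : forall i, d i = 0.
      apply: (L_free fr0); split => // i; rewrite in_setD1 negb_and negbK.
      case/orP => [/eqP->//|iU]; apply: dS; rewrite in_setD1 negb_and iU orbT //.
    by rewrite dz eqxx in dj.
  have ez : forall i, c i + d i = 0.
    apply: (L_free fr0); split.
      move=> i; rewrite in_setD1 negb_and negbK; case/orP => [/eqP->|iU].
        by rewrite ck0 dk0 f2d.
      rewrite cS // dS ?addr0 // in_setD1 negb_and iU orbT //.
    under eq_bigr do rewrite scalerDl.
    by rewrite big_split /= csum dsum addr0.
  have := ez k; rewrite (dS k) ?setD11 // addr0 => /eqP; by rewrite (negbTE ck).
rewrite (eq_bigl (fun k => c k != 0)); last first.
  move=> k; case: (boolP (k \in U)) => kU /=.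
    by apply/idP/idP => [/H1|/H2]; apply.
  by rewrite cS // eqxx.
rewrite -[RHS]csum big_mkcond /=; apply: eq_bigr => k _.
by case: (f2 (c k)) => ->; rewrite ?eqxx ?scale0r ?scale1r //; case: ifP.
Qed.

End Lin.
Arguments fr {K N} D S.
Arguments key {K N} D r U.

Theorem mainTheorem6 (K N len t : nat) (D : 'M['F_2]_(K, N))
  (L A : {set 'I_K})
  (ht : (t < K)%N)
  (hL1 : #|L| = \rank (subrows D L))
  (hL2 : \rank (subrows D L) = \rank D)
  (hA1 : [disjoint A & L])
  (hA2 : #|A| = t.+1)
  (F : 'I_N -> {set 'I_K} -> 'rV['F_2]_len) :
  let B := L :|: A in
  [/\ \sum_(V : {set 'I_K} | inVB D L B V) msg D F (B :\: V) = 0,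
      msg D F A = \sum_(V : {set 'I_K} | inVB D L B V && (V != L)) msg D F (B :\: V)
    & forall V : {set 'I_K}, inVB D L B V -> V != L -> (B :\: V) :&: L != set0].
Proof.
move=> B.
have hLr : #|L| = \rank D by rewrite hL1 hL2.
have part1 : \sum_(V : {set 'I_K} | inVB D L B V) msg D F (B :\: V) = 0.
  have E1 V : msg D F (B :\: V) = \sum_k (if k \in B :\: V then block D F k (B :\: (k |: V)) else 0).
    rewrite /msg big_mkcond; apply: eq_bigr => k _; case: ifP => // _; congr block.
    apply/setP => x; rewrite !inE negb_or.
    by case: (x == k); case: (x \in V); case: (x \in B).
  rewrite (eq_bigr _ (fun V _ => E1 V)) exchange_big /=.
  have E2 k : \sum_(V | inVB D L B V) (if k \in B :\: V then block D F k (B :\: (k |: V)) else 0)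
     = \sum_(U : {set 'I_K} | [&& inVB D L B (U :\ k), k \in B :\: (U :\ k) & k \in U])
                block D F k (B :\: U).
    rewrite -big_mkcondr (reindex_onto (fun U => U :\ k) (fun V => k |: V)) /=; last first.
      by move=> V /andP[_]; rewrite inE => /andP[kV _]; rewrite setU1K.
    apply: eq_big => // U.
      rewrite -andbA; congr (_ && (_ && _)).
      case kU: (k \in U); first by rewrite setD1K // eqxx.
      by apply/negbTE; apply: contraFN kU => /eqP <-; rewrite setU11.
    by move=> /andP[_ /eqP ->].
  rewrite (eq_bigr _ (fun k _ => E2 k)).
  under eq_bigr do rewrite big_mkcond.
  rewrite exchange_big /=; apply: big1 => U _.
  rewrite -big_mkcond /= /block exchange_big /=.
  apply: big1 => n _; rewrite -scaler_suml.
  set Q := fun k => [&& inVB D L B (U :\ k), k \in B :\: (U :\ k) & k \in U].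
  suff R : \sum_(k | Q k) row k D = 0.
    have h0 : \sum_(k | Q k) D k n = 0.
      have := congr1 (fun M : 'rV_N => M 0 n) R; rewrite summxE mxE => e.
      rewrite -[RHS]e; by apply: eq_bigr => k _; rewrite mxE.
    by rewrite h0 scale0r.
  case: (boolP [exists k, Q k]) => [/existsP[k0 hk0]|/existsPn H]; last first.
    by rewrite big_pred0 // => k; apply/negbTE/H.
  move: hk0; rewrite /Q /inVB => /and3P[/and3P[sub card rk] k0B k0U].
  move: k0B; rewrite inE => /andP[_ k0B].
  have UB : U \subset B by rewrite -(setD1K k0U) subUset sub1set k0B sub.
  have cU : #|U| = #|L|.+1 by rewrite (cardsD1 k0 U) k0U (eqP card).
  rewrite (eq_bigl (fun k => (k \in U) && fr D (U :\ k))); last first.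
    move=> k; case: (boolP (k \in U)) => kU /=; last by rewrite !andbF.
    have cUk : #|U :\ k| = #|L| by move: cU; rewrite (cardsD1 k U) kU add1n => -[].
    have e1 : (#|U :\ k| == #|L|) = true by rewrite cUk eqxx.
    have e2 : forall a : nat, (a == #|L|) = (a == #|U :\ k|) by move=> a; rewrite cUk.
    rewrite /Q /inVB (subset_trans (subD1set U k) UB) e1 e2 /fr.
    by rewrite in_setD setD11 (subsetP UB k kU) !andbT.
  by apply: (key D #|L|) => //; rewrite hLr.
split => //.
  have inL : inVB D L B L by rewrite /inVB subsetUl eqxx -hL1 eqxx.
  move: part1; rewrite (bigD1 L) //=.
  have -> : B :\: L = A by rewrite /B setDUl setDv set0U; apply/setDidPl.
  move=> h; apply/rowP => i; have := congr1 (fun M : 'rV_len => M 0 i) h.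
  rewrite !mxE => h'.
  set y := \sum_(V | _) _ in h h' *.
  by rewrite -[LHS]addr0 -(f2d (y 0 i)) addrA h' add0r.
move=> V /and3P[sub card _] VL; apply/negP => /eqP h; move/negP: VL; apply.
rewrite eq_sym eqEcard (eqP card) leqnn andbT; apply/subsetP => l lL.
apply/negPn/negP => lV.
have : l \in (B :\: V) :&: L by rewrite /B !inE lV lL.
by rewrite h inE.
Qed.
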